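(* Every $T_1$-space with a regular base at non-isolated points has a point-countable base.
   Context: $I(X)$ is the set of isolated points. A base $\mathcal{B}$ is regular at $x$ if for every neighborhood $U$ of $x$ there is an open $V$ with $x\in V\subset U$ such that $\{B\in\mathcal{B}: B\cap V\neq\emptyset,\ B\not\subset U\}$ is finite; a regular base at non-isolated points is regular at every $x\in X\setminus I(X)$. A base is point-countable if each point lies in at most countably many of its members. *)

(* Defs.v *)
From Stdlib Require Import List.

Set Implicit Arguments.

Definition is_topology (X : Type) (open : (X -> Prop) -> Prop) : Prop :=
  open (fun _ => True) /\
  (forall U V, open U -> open V -> open (fun x => U x /\ V x)) /\
  (forall F : (X -> Prop) -> Prop, (forall U, F U -> open U) ->
     open (fun x => exists U, F U /\ U x)).

Definition subset (X : Type) (A B : X -> Prop) : Prop := forall x, A x -> B x.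

Definition is_base (X : Type) (open : (X -> Prop) -> Prop)
    (B : (X -> Prop) -> Prop) : Prop :=
  (forall b, B b -> open b) /\
  (forall U x, open U -> U x -> exists b, B b /\ b x /\ subset b U).

Definition T1 (X : Type) (open : (X -> Prop) -> Prop) : Prop :=
  forall x y : X, x <> y -> exists U, open U /\ U x /\ ~ U y.

Definition isolated (X : Type) (open : (X -> Prop) -> Prop) (x : X) : Prop :=
  open (fun y => y = x).

Definition nbhd (X : Type) (open : (X -> Prop) -> Prop) (x : X) (N : X -> Prop) : Prop :=
  exists U, open U /\ U x /\ subset U N.

Definition finite_family (X : Type) (F : (X -> Prop) -> Prop) : Prop :=
  exists l : list (X -> Prop), forall b, F b -> In b l.

Definition countable_family (X : Type) (F : (X -> Prop) -> Prop) : Prop :=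
  exists f : (X -> Prop) -> nat, forall b1 b2, F b1 -> F b2 -> f b1 = f b2 -> b1 = b2.

Definition regular_at (X : Type) (open : (X -> Prop) -> Prop)
    (B : (X -> Prop) -> Prop) (x : X) : Prop :=
  forall U, nbhd open x U ->
    exists V, open V /\ V x /\ subset V U /\
      finite_family (fun b => B b /\ (exists y, b y /\ V y) /\ ~ subset b U).

Definition regular_base_at_nonisolated (X : Type) (open : (X -> Prop) -> Prop)
    (B : (X -> Prop) -> Prop) : Prop :=
  is_base open B /\ forall x, ~ isolated open x -> regular_at open B x.

Definition point_countable (X : Type) (B : (X -> Prop) -> Prop) : Prop :=
  forall x : X, countable_family (fun b => B b /\ b x).

(* Main.v *)
Require Import Defs.
From Stdlib Require Import List.
From Stdlib Require Import Classical ClassicalEpsilon FunctionalExtensionality PropExtensionality Cantor Lia.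

Section Count.
Variable T : Type.
Definition em_inf (P : Prop) : {P} + {~P} := excluded_middle_informative P.

Fixpoint idx (l : list T) (a : T) : nat :=
  match l with
  | nil => 0
  | x :: l' => if em_inf (x = a) then 0 else S (idx l' a)
  end.

Lemma idx_nth (l : list T) a d : In a l -> nth (idx l a) l d = a.
Proof.
  induction l as [|x l IH]; simpl; [tauto|].
  intros [H|H]; destruct (em_inf (x = a)); auto; congruence.
Qed.

Lemma filter_lt (f : T -> bool) (l : list T) a :
  In a l -> f a = false -> length (filter f l) < length l.
Proof.
  induction l as [|x l IH]; simpl; [tauto|].
  intros [H|H] Hf.
  - subst. rewrite Hf. pose proof (List.filter_length_le f l). lia.
  - destruct (f x); simpl; specialize (IH H Hf); lia.
Qed.
End Count.

Lemma countable_fnb (X : Type) (F : (X -> Prop) -> Prop) :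
  (forall a, F a -> exists L, forall c, F c -> ~ subset c a -> In c L) ->
  countable_family F.
Proof.
  intros H.
  set (cover := fun a L => forall c, F c -> ~ subset c a -> In c L).
  assert (Hmin : forall a n, (exists L, length L <= n /\ cover a L) ->
     exists L, cover a L /\ forall L', cover a L' -> length L <= length L').
  { intros a n. induction n as [|n IH]; intros [L [HL HC]].
    - exists L. split; auto. intros. lia.
    - destruct (classic (exists L', length L' <= n /\ cover a L')) as [E|E].
      + apply IH; auto.
      + exists L. split; auto. intros L' HL'.
        destruct (Compare_dec.le_gt_dec (length L') n) as [h|h]; [|lia].
        exfalso; apply E; eauto. }
  assert (Hr : forall a, exists p : nat * list (X -> Prop), F a ->
     length (snd p) = fst p /\ cover a (snd p) /\
     forall L, cover a L -> fst p <= length L).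
  { intros a. destruct (classic (F a)) as [Fa|Fa].
    - destruct (H a Fa) as [L HL].
      destruct (Hmin a (length L)) as [L0 [HC HM]]; [exists L; split; auto|].
      exists (length L0, L0). intros _. simpl. auto.
    - exists (0, nil). tauto. }
  set (p := fun a => proj1_sig (constructive_indefinite_description _ (Hr a))).
  assert (Hp : forall a, F a -> length (snd (p a)) = fst (p a) /\ cover a (snd (p a)) /\
     forall L, cover a L -> fst (p a) <= length L).
  { intros a. exact (proj2_sig (constructive_indefinite_description _ (Hr a))). }
  set (r := fun a => fst (p a)).
  assert (Hext : forall a c : X -> Prop, subset a c -> subset c a -> a = c).
  { intros a c h1 h2. apply functional_extensionality; intro x.
    apply propositional_extensionality; split; auto. }
  assert (Hlt : forall a c, F a -> F c -> subset c a -> c <> a -> r a < r c).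
  { intros a c Fa Fc Sca Nca.
    destruct (Hp c Fc) as [Hl [Hc _]]. destruct (Hp a Fa) as [_ [_ Hm]].
    set (f := fun d : X -> Prop => if em_inf (d = a) then false else true).
    assert (Ina : In a (snd (p c))).
    { apply Hc; [exact Fa|]. intro S. apply Nca. apply Hext; auto. }
    assert (Cov : cover a (filter f (snd (p c)))).
    { intros d Fd Nd. apply filter_In. split.
      - apply Hc; auto. intro S. apply Nd. intros x hx; auto.
      - unfold f. destruct (em_inf (d = a)); auto. subst. exfalso; apply Nd; intros x hx; auto. }
    pose proof (Hm _ Cov).
    pose proof (filter_lt _ f (snd (p c)) a Ina) as Hf.
    assert (f a = false) by (unfold f; destruct (em_inf (a = a)); congruence).
    specialize (Hf H1). unfold r. lia. }
  assert (Hfib : forall a c, F a -> F c -> r a = r c -> a <> c -> In c (snd (p a))).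
  { intros a c Fa Fc Er Nac. destruct (Hp a Fa) as [_ [Hc _]]. apply Hc; auto.
    intro S. pose proof (Hlt a c Fa Fc S (fun e => Nac (eq_sym e))). lia. }
  set (rep := fun n => match em_inf (exists a, F a /\ r a = n) with
                       | left e => proj1_sig (constructive_indefinite_description _ e)
                       | right _ => fun _ : X => False end).
  assert (Hrep : forall a, F a -> F (rep (r a)) /\ r (rep (r a)) = r a).
  { intros a Fa. unfold rep. destruct (em_inf (exists a0, F a0 /\ r a0 = r a)) as [e|e].
    - exact (proj2_sig (constructive_indefinite_description _ e)).
    - exfalso; eauto. }
  set (M := fun n => rep n :: snd (p (rep n))).
  assert (HinM : forall a, F a -> In a (M (r a))).
  { intros a Fa. destruct (Hrep a Fa) as [F1 E1]. unfold M.
    destruct (classic (rep (r a) = a)) as [e|e]; [left; auto|].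
    right. apply Hfib; auto. }
  exists (fun a => Cantor.to_nat (r a, idx _ (M (r a)) a)).
  intros b1 b2 F1 F2 E.
  apply (f_equal Cantor.of_nat) in E. rewrite !cancel_of_to in E.
  pose proof (f_equal fst E) as E1. pose proof (f_equal snd E) as E2.
  cbn [fst snd] in E1, E2.
  pose proof (idx_nth _ (M (r b1)) b1 (fun _ => False) (HinM b1 F1)) as N1.
  pose proof (idx_nth _ (M (r b2)) b2 (fun _ => False) (HinM b2 F2)) as N2.
  rewrite <- N1, <- N2. rewrite E2. rewrite E1. reflexivity.
Qed.

Lemma countable_image (X : Type) (F G : (X -> Prop) -> Prop) (h : (X -> Prop) -> (X -> Prop)) :
  countable_family F -> (forall W, G W -> exists a, F a /\ W = h a) -> countable_family G.
Proof.
  intros [f Hf] HG.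
  exists (fun W => match em_inf (exists a, F a /\ W = h a) with
           | left e => f (proj1_sig (constructive_indefinite_description _ e))
           | right _ => 0 end).
  intros b1 b2 G1 G2.
  destruct (em_inf (exists a, F a /\ b1 = h a)) as [e1|e1]; [|exfalso; auto].
  destruct (em_inf (exists a, F a /\ b2 = h a)) as [e2|e2]; [|exfalso; auto].
  destruct (proj2_sig (constructive_indefinite_description _ e1)) as [Fa1 Ea1].
  destruct (proj2_sig (constructive_indefinite_description _ e2)) as [Fa2 Ea2].
  intros E. rewrite Ea1, Ea2. f_equal. apply Hf; auto.
Qed.

Lemma countable_add1 (X : Type) (F G : (X -> Prop) -> Prop) (w0 : X -> Prop) :
  countable_family F -> (forall W, G W -> W = w0 \/ F W) -> countable_family G.
Proof.
  intros [f Hf] HG.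
  exists (fun W => if em_inf (W = w0) then 0 else S (f W)).
  intros b1 b2 G1 G2.
  destruct (em_inf (b1 = w0)) as [e1|e1]; destruct (em_inf (b2 = w0)) as [e2|e2];
    try congruence.
  intros E. injection E as E.
  destruct (HG b1 G1) as [?|H1]; [congruence|].
  destruct (HG b2 G2) as [?|H2]; [congruence|]. auto.
Qed.

Theorem mainTheorem17 (X : Type) (open : (X -> Prop) -> Prop) :
  is_topology open -> T1 open ->
  (exists B, regular_base_at_nonisolated open B) ->
  exists B, is_base open B /\ point_countable B.
Proof.
  intros [HT [HI HU]] _ [B [[HBo HBb] HR]].
  set (good := fun y a V => open V /\ V y /\ subset V a /\
      finite_family (fun b => B b /\ (exists y, b y /\ V y) /\ ~ subset b a)).
  set (Wa := fun a : X -> Prop => fun x => exists U,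
      (exists y, ~ isolated open y /\ a y /\ good y a U) /\ U x).
  exists (fun W => (exists z, isolated open z /\ W = (fun y => y = z)) \/
                   (exists a, B a /\ W = Wa a)).
  split; [split|].
  - intros b [[z [Hz ->]]|[a [Ba ->]]]; auto.
    apply HU. intros U [y [_ [_ [G _]]]]. exact G.
  - intros U x HoU HUx.
    destruct (classic (isolated open x)) as [Iso|NIso].
    + exists (fun y => y = x). split; [left; eauto|]. split; auto.
      intros y ->; auto.
    + destruct (HBb U x HoU HUx) as [b [Bb [bx bU]]].
      destruct (HR x NIso b) as [V [HV1 [HV2 [HV3 HV4]]]].
      { exists b. repeat split; auto. intros y h; auto. }
      exists (Wa b). split; [right; eauto|]. split.
      * exists V. split; auto. exists x. repeat split; auto.
      * intros y [V' [[y' [_ [_ [_ [_ [S _]]]]]] Hy]]. apply bU, S, Hy.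
  - intros p.
    set (A := fun a => B a /\ Wa a p).
    assert (CA : countable_family A).
    { apply countable_fnb. intros a [Ba [V [[y [Ny [ay [HV1 [HV2 [HV3 [L HL]]]]]]] Vp]]].
      exists L. intros c [Bc [V' [[y' [_ [_ [_ [_ [S' _]]]]]] V'p]]] Nca.
      apply HL. repeat split; auto. exists p. split; auto. }
    apply countable_add1 with (F := fun W => exists a, A a /\ W = Wa a) (w0 := fun y => y = p).
    + apply countable_image with (F := A) (h := Wa); auto.
    + intros W [[[z [Hz ->]]|[a [Ba ->]]] Wp].
      * left. subst. reflexivity.
      * right. exists a. split; auto. split; auto.
Qed.
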